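(* For the slotted $N$-queue system with the information structure described in the context, the class of throughput optimal, stationary Markov scheduling policies is not a singleton.
   Context: $N$ queues $I=\{1,\dots,N\}$ share a single server in slotted time; arrivals to queue $j$ are i.i.d. Bernoulli($\lambda_j$), independent across queues; at most one queue is scheduled per slot, transmitting one packet if nonempty; $Q_j(t+1)=(Q_j(t)-D_j(t))^++A_j(t+1)$. Information structure: at each slot the scheduler knows the queue scheduled in the previous slot (the incumbent) and its current backlog, the backlog of each queue at the end of the last slot it was allowed to transmit, and for each queue $j$ the number $V_j(t)$ of slots since it was last scheduled. A scheduling policy is stationary Markov if its decision in each slot depends only on the current state (of these quantities), through a fixed map. A policy is throughput optimal if it makes the system stable (the backlog Markov chain positive recurrent) for every arrival rate vector in the capacity region $\{\boldsymbol\lambda\in\mathbb{R}^N_+:\sum_i\lambda_i<1\}$. *)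

(* Defs.v *)
From mathcomp Require Import all_boot.
From Stdlib Require Import Reals.
Set Implicit Arguments.
Unset Strict Implicit.
Unset Printing Implicit Defensive.

(** Queues are indexed by 'I_N  (queue j of the paper is the ordinal j-1). *)

(** Full system state at the beginning of a slot t:
    - Q    : true backlogs Q_j(t)
    - inc  : the incumbent (queue scheduled in the previous slot)
    - L    : for each queue, its backlog observed at the end of the last slot
             in which it was allowed to transmit
    - V    : V_j(t), number of slots since queue j was last scheduled. *)
Definition state (N : nat) : Type :=
  ({ffun 'I_N -> nat} * 'I_N * {ffun 'I_N -> nat} * {ffun 'I_N -> nat})%type.

Definition stQ N (x : state N) : {ffun 'I_N -> nat} := x.1.1.1.
Definition stInc N (x : state N) : 'I_N := x.1.1.2.
Definition stL N (x : state N) : {ffun 'I_N -> nat} := x.1.2.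
Definition stV N (x : state N) : {ffun 'I_N -> nat} := x.2.

(** A stationary Markov scheduling policy: a fixed map from the scheduler's
    current information (incumbent, incumbent's current backlog, last observed
    backlogs, ages V) to the queue scheduled in the current slot. *)
Definition policy (N : nat) : Type :=
  'I_N -> nat -> {ffun 'I_N -> nat} -> {ffun 'I_N -> nat} -> 'I_N.

Definition decide N (pi : policy N) (x : state N) : 'I_N :=
  pi (stInc x) (stQ x (stInc x)) (stL x) (stV x).

(** One slot of dynamics, given the arrival vector a = (A_j(t+1))_j.
    D_j(t) = 1 iff j is scheduled (and nonempty); truncated subtraction gives
    Q_j(t+1) = (Q_j(t) - D_j(t))^+ + A_j(t+1). *)
Definition step N (pi : policy N) (x : state N) (a : {ffun 'I_N -> bool}) : state N :=
  let s := decide pi x in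
  let Q' := [ffun j => (stQ x j - (j == s)) + a j] in
  let L' := [ffun j => if j == s then Q' s else stL x j] in
  let V' := [ffun j => if j == s then 1 else (stV x j).+1] in
  (Q', s, L', V').

Definition sumR (A : Type) (s : seq A) (f : A -> R) : R :=
  foldr (fun a acc => (f a + acc)%R) 0%R s.

(** Probability of the arrival vector a: independent Bernoulli(lam j). *)
Definition arrP N (lam : 'I_N -> R) (a : {ffun 'I_N -> bool}) : R :=
  foldr (fun j acc => ((if a j then lam j else 1 - lam j) * acc)%R) 1%R (enum 'I_N).

Definition Earr N (lam : 'I_N -> R) (f : {ffun 'I_N -> bool} -> R) : R :=
  sumR (enum {ffun 'I_N -> bool}) (fun a => (arrP lam a * f a)%R).

Fixpoint pstep N (pi : policy N) (lam : 'I_N -> R) (n : nat) (x y : state N) : R :=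
  match n with
  | 0 => if x == y then 1%R else 0%R
  | n'.+1 => Earr lam (fun a => pstep pi lam n' (step pi x a) y)
  end.

(** First-passage probability f^n(x, y) = P_x(T_y = n), T_y = inf {t >= 1 : X_t = y}. *)
Fixpoint fpass N (pi : policy N) (lam : 'I_N -> R) (n : nat) (x y : state N) : R :=
  match n with
  | 0 => 0%R
  | n'.+1 => Earr lam (fun a =>
               let z := step pi x a in
               if z == y then (if n' == 0 then 1%R else 0%R)
               else fpass pi lam n' z y)
  end.

Definition reachable N (pi : policy N) (lam : 'I_N -> R) (x y : state N) : Prop :=
  exists n, (0 < pstep pi lam n x y)%R.

Definition pos_recurrent N (pi : policy N) (lam : 'I_N -> R) (y : state N) : Prop :=
  infinite_sum (fun n => fpass pi lam n y y) 1%R /\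
  exists m : R, infinite_sum (fun n => (INR n * fpass pi lam n y y)%R) m.

Definition stable N (pi : policy N) (lam : 'I_N -> R) : Prop :=
  forall x0 : state N, exists y : state N,
    pos_recurrent pi lam y /\
    (x0 = y \/ infinite_sum (fun n => fpass pi lam n x0 y) 1%R).

Definition in_capacity N (lam : 'I_N -> R) : Prop :=
  (forall j, 0 <= lam j)%R /\ (sumR (enum 'I_N) lam < 1)%R.

Definition throughput_optimal N (pi : policy N) : Prop :=
  forall lam : 'I_N -> R, in_capacity lam -> stable pi lam.

Definition empty_state N (i0 : 'I_N) : state N :=
  ([ffun => 0], i0, [ffun => 0], [ffun => 0]).

(* Main.v *)
Require Import Defs.
From mathcomp Require Import all_boot all_algebra.
From mathcomp Require Import Rstruct zify.
From Stdlib Require Import Reals Lra Lia.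
Set Implicit Arguments.
Unset Strict Implicit.
Unset Printing Implicit Defensive.

Open Scope R_scope.

Lemma sumR_big (A : Type) (s : seq A) f : sumR s f = \big[Rplus/0]_(a <- s) f a.
Proof. elim: s => [|a s IH] /=; first by rewrite big_nil. by rewrite big_cons IH. Qed.

Lemma arrP_big N (lam : 'I_N -> R) a :
  arrP lam a = \big[Rmult/1]_(j : 'I_N) (if a j then lam j else 1 - lam j).
Proof.
rewrite /arrP -big_enum /=.
elim: (enum _) => [|j s IH] /=; first by rewrite big_nil. by rewrite big_cons IH.
Qed.

Lemma Earr_big N (lam : 'I_N -> R) f :
  Earr lam f = \big[Rplus/0]_(a : {ffun 'I_N -> bool}) (arrP lam a * f a).
Proof. by rewrite /Earr sumR_big big_enum. Qed.

Open Scope R_scope.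

Section Prob.
Variables (N : nat) (lam : 'I_N -> R).
Hypothesis lam01 : forall j, 0 <= lam j <= 1.

Lemma arrP_ge0 a : 0 <= arrP lam a.
Proof.
rewrite arrP_big; apply: (big_ind (fun x => 0 <= x)); [lra| |].
- by move=> x y hx hy; apply: Rmult_le_pos.
- by move=> j _; case: (a j); have := lam01 j; lra.
Qed.

Lemma arrP_sum : \big[Rplus/0]_(a : {ffun 'I_N -> bool}) arrP lam a = 1.
Proof.
under eq_bigr => a _ do rewrite arrP_big.
rewrite -(@bigA_distr_bigA R 0 1 Rmult Rplus _ _ (fun j (b : bool) => if b then lam j else 1 - lam j)).
apply: big1 => j _.
rewrite big_bool /=. lra.
Qed.

Lemma arrP_marg (j : 'I_N) :
  \big[Rplus/0]_(a : {ffun 'I_N -> bool}) (arrP lam a * (if a j then 1 else 0)) = lam j.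
Proof.
have E : forall a : {ffun 'I_N -> bool},
  arrP lam a * (if a j then 1 else 0) =
  \big[Rmult/1]_(i : 'I_N) ((if a i then lam i else 1 - lam i) *
         (if i == j then (if a i then 1 else 0) else 1)).
  move=> a; rewrite arrP_big big_split /=; congr Rmult.
  rewrite (bigD1 j) //= eqxx big1 ?Rmult_1_r // => i /negbTE ->; done.
under eq_bigr => a _ do rewrite E.
rewrite -(@bigA_distr_bigA R 0 1 Rmult Rplus _ _ (fun i (b : bool) => (if b then lam i else 1 - lam i) *
         (if i == j then (if b then 1 else 0) else 1))).
rewrite (bigD1 j) //= big_bool /= eqxx big1.
- lra.
- move=> i /negbTE hi; rewrite big_bool /= hi; lra.
Qed.

End Prob.

Open Scope R_scope.

Section EarrL.
Variables (N : nat) (lam : 'I_N -> R).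
Hypothesis lam01 : forall j, 0 <= lam j <= 1.

Lemma Earr_ext f g : (forall a, f a = g a) -> Earr lam f = Earr lam g.
Proof. by move=> h; rewrite !Earr_big; apply: eq_bigr => a _; rewrite h. Qed.

Lemma Earr_plus f g : Earr lam (fun a => f a + g a) = Earr lam f + Earr lam g.
Proof.
rewrite !Earr_big -big_split /=; apply: eq_bigr => a _; ring.
Qed.

Lemma Earr_scal c f : Earr lam (fun a => c * f a) = c * Earr lam f.
Proof.
rewrite !Earr_big big_distrr /=; apply: eq_bigr => a _; ring.
Qed.

Lemma Earr_const c : Earr lam (fun _ => c) = c.
Proof.
rewrite Earr_big -big_distrl /= (arrP_sum lam); ring.
Qed.

Lemma Earr_le f g : (forall a, f a <= g a) -> Earr lam f <= Earr lam g.
Proof.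
move=> h; rewrite !Earr_big; apply: (big_ind2 (fun x y => x <= y)); [lra|move=> *; lra|].
move=> a _; apply: Rmult_le_compat_l; [exact: arrP_ge0|exact: h].
Qed.

Lemma Earr_ge0 f : (forall a, 0 <= f a) -> 0 <= Earr lam f.
Proof. by move=> h; rewrite -(Earr_const 0); apply: Earr_le. Qed.

Lemma Earr_sumf (f : nat -> {ffun 'I_N -> bool} -> R) n :
  Earr lam (fun a => sum_f_R0 (fun k => f k a) n) = sum_f_R0 (fun k => Earr lam (f k)) n.
Proof.
elim: n => [|n IH] /=; first by [].
by rewrite Earr_plus IH.
Qed.

Lemma Earr_bigsum (f : 'I_N -> {ffun 'I_N -> bool} -> R) :
  Earr lam (fun a => \big[Rplus/0]_(j : 'I_N) f j a) =
  \big[Rplus/0]_(j : 'I_N) Earr lam (f j).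
Proof.
rewrite Earr_big.
under eq_bigr => a _ do rewrite big_distrr /=.
rewrite exchange_big /=; apply: eq_bigr => j _; by rewrite Earr_big.
Qed.

Lemma Earr_marg (j : 'I_N) : Earr lam (fun a => if a j then 1 else 0) = lam j.
Proof. by rewrite Earr_big arrP_marg. Qed.

Lemma Earr_split g a0 H : (forall a, g a <= H) ->
  Earr lam g <= arrP lam a0 * g a0 + (1 - arrP lam a0) * H.
Proof.
move=> h; rewrite Earr_big (bigD1 a0) //=.
have S := arrP_sum lam; rewrite (bigD1 a0) //= in S.
have -> : 1 - arrP lam a0 = \big[Rplus/0]_(a | a != a0) arrP lam a.
  by rewrite -S Rplus_minus_l.
rewrite big_distrl /=; apply: Rplus_le_compat_l.
apply: (big_ind2 (fun x y => x <= y)); [lra|move=> *; lra|].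
move=> a _; apply: Rmult_le_compat_l; [exact: arrP_ge0|exact: h].
Qed.

End EarrL.

Open Scope R_scope.

Lemma sum_shift (f : nat -> R) n :
  sum_f_R0 f n.+1 = f 0%nat + sum_f_R0 (fun k => f k.+1) n.
Proof.
elim: n => [|n IH] /=; first by [].
rewrite /= in IH. rewrite IH; ring.
Qed.

Lemma sum_ind0 (g : nat -> R) n :
  sum_f_R0 (fun k => g k * (if k == 0%nat then 1 else 0)) n = g 0%nat.
Proof.
elim: n => [|n IH] /=; first by ring.
rewrite IH; ring.
Qed.

Lemma sum_ind1 n : sum_f_R0 (fun k => if k == 0%nat then 1 else 0) n = 1.
Proof. elim: n => [|n IH] /=; first by []. rewrite IH; ring. Qed.

Section Hit.
Variables (N : nat) (pi : policy N) (lam : 'I_N -> R).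
Hypothesis lam01 : forall j, 0 <= lam j <= 1.
Variable y : state N.
Variable Wl : state N -> R.
Hypothesis Wl_ge0 : forall x, 0 <= Wl x.
Hypothesis Wl_drift : forall x,
  1 + Earr lam (fun a => if step pi x a == y then 0 else Wl (step pi x a)) <= Wl x.

Fixpoint u n x : R :=
  match n with
  | 0 => 1
  | n'.+1 => Earr lam (fun a => if step pi x a == y then 0 else u n' (step pi x a))
  end.

Lemma u_ge0 n x : 0 <= u n x.
Proof.
elim: n x => [|n IH] x /=; first lra.
apply: Earr_ge0 => // a; case: ifP => _; [lra|exact: IH].
Qed.

Lemma fpass_ge0 n x : 0 <= fpass pi lam n x y.
Proof.
elim: n x => [|n IH] x /=; first lra.
apply: Earr_ge0 => // a; case: ifP => _; [case: ifP => _; lra|exact: IH].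
Qed.

Lemma Earr_cminus c g : Earr lam (fun a => c - g a) = c - Earr lam g.
Proof.
transitivity (Earr lam (fun a => (fun _ => c) a + (fun a => (-1) * g a) a)).
  by apply: Earr_ext => a; ring.
rewrite Earr_plus Earr_scal Earr_const; ring.
Qed.

Lemma F_eq n x : sum_f_R0 (fun k => fpass pi lam k x y) n = 1 - u n x.
Proof.
elim: n x => [|n IH] x; first by rewrite /=; ring.
rewrite sum_shift /= Rplus_0_l.
rewrite -(Earr_sumf lam (fun k a => if step pi x a == y then (if k == 0%nat then 1 else 0)
                     else fpass pi lam k (step pi x a) y)).
rewrite -Earr_cminus; apply: Earr_ext => a.
case: ifP => _.
- rewrite sum_ind1; ring.
- rewrite IH; ring.
Qed.

Lemma M_bound n x :
  sum_f_R0 (fun k => INR k * fpass pi lam k x y) n + INR n * u n x <= Wl x.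
Proof.
elim: n x => [|n IH] x.
  rewrite /=; have := Wl_ge0 x; lra.
rewrite sum_shift /=.
set G := fun k a => if step pi x a == y then (if k == 0%nat then 1 else 0)
                     else fpass pi lam k (step pi x a) y.
set U := fun a => if step pi x a == y then 0 else u n (step pi x a).
have E1 : sum_f_R0 (fun k => INR k.+1 * fpass pi lam k.+1 x y) n =
          Earr lam (fun a => sum_f_R0 (fun k => INR k.+1 * G k a) n).
  rewrite Earr_sumf; apply: sum_eq => k _.
  by rewrite -Earr_scal.
have E2 : INR n.+1 * u n.+1 x = Earr lam (fun a => INR n.+1 * U a).
  by rewrite Earr_scal.
rewrite E1 E2 Rmult_0_l Rplus_0_l -Earr_plus.
apply: Rle_trans (Wl_drift x).
rewrite -[X in X + _](Earr_const lam 1) -Earr_plus.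
apply: Earr_le => // a.
rewrite /G /U; case: ifP => _.
- have := sum_ind0 (fun k => INR k.+1) n; rewrite /= => ->; lra.
- have := IH (step pi x a).
  have := F_eq n (step pi x a).
  have -> : sum_f_R0 (fun k => INR k.+1 * fpass pi lam k (step pi x a) y) n =
     sum_f_R0 (fun k => INR k * fpass pi lam k (step pi x a) y) n +
     sum_f_R0 (fun k => fpass pi lam k (step pi x a) y) n.
    rewrite -plus_sum; apply: sum_eq => k _; rewrite S_INR; ring.
  rewrite S_INR; lra.
Qed.

Lemma fpass_sum1 x : infinite_sum (fun n => fpass pi lam n x y) 1.
Proof.
move=> eps heps.
have [hup _] := archimed (Wl x / eps).
set K := up (Wl x / eps) in hup.
exists (Z.to_nat K).+1 => n hn.
rewrite /R_dist F_eq.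
have hw := Wl_ge0 x.
have hK0 : (0 <= K)%Z.
  apply: le_IZR; apply: Rlt_le; apply: (Rle_lt_trans _ _ _ _ hup).
  apply: Rmult_le_pos => //; apply: Rlt_le; apply: Rinv_0_lt_compat => //.
have hK : (Wl x / eps < INR n).
  apply: (Rlt_le_trans _ _ _ hup).
  rewrite -(Znat.Z2Nat.id K hK0) -INR_IZR_INZ; apply: le_INR; lia.
have hb := M_bound n x.
have hM : 0 <= sum_f_R0 (fun k => INR k * fpass pi lam k x y) n.
  apply: cond_pos_sum => k; apply: Rmult_le_pos; [apply: pos_INR|apply: fpass_ge0].
have hu := u_ge0 n x.
have hn0 : 0 < INR n by apply: lt_0_INR; lia.
have : Wl x < eps * INR n.
  have := Rmult_lt_compat_l eps _ _ heps hK.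
  by rewrite /Rdiv Rmult_comm Rmult_assoc Rinv_l ?Rmult_1_r; lra.
move=> h.
rewrite Rabs_left1; last lra.
have : u n x * INR n < eps * INR n by nra.
move=> h2. apply: (Rmult_lt_reg_r (INR n)) => //. lra.
Qed.

Lemma pos_rec : pos_recurrent pi lam y.
Proof.
split; first exact: fpass_sum1.
have gr : Un_growing (sum_f_R0 (fun n => INR n * fpass pi lam n y y)).
  move=> n; have : 0 <= INR n.+1 * fpass pi lam n.+1 y y.
    apply: Rmult_le_pos; [apply: pos_INR|apply: fpass_ge0].
  have E : forall f m, sum_f_R0 f m.+1 = sum_f_R0 f m + f m.+1 by [].
  rewrite E; lra.
have ub : has_ub (sum_f_R0 (fun n => INR n * fpass pi lam n y y)).
  exists (Wl y) => r [n ->].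
  have := M_bound n y; have := u_ge0 n y; have := pos_INR n; nra.
have [l hl] := growing_cv _ gr ub.
by exists l.
Qed.

End Hit.

Close Scope R_scope.

Section Cyc.
Variable n : nat.
Hypothesis hn : (0 < n)%nat.

Definition nxt (i : 'I_n.+1) : 'I_n.+1 := if (i < n)%nat then inord i.+1 else ord0.

Definition cdist (i j : 'I_n.+1) : nat := if (i <= j)%nat then j - i else n.+1 + j - i.

Lemma nxtE (i : 'I_n.+1) : nat_of_ord (nxt i) = if (i < n)%nat then i.+1 else 0.
Proof. rewrite /nxt; case: ifP => h //; rewrite inordK //. Qed.

Lemma ordb (i : 'I_n.+1) : (i <= n)%nat.
Proof. by have := ltn_ord i. Qed.

Lemma nxt_neq i : nxt i != i.
Proof. apply/eqP => /(f_equal (@nat_of_ord _)); rewrite nxtE; case: ifP => h; lia. Qed.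

Lemma cdist_le i j : (cdist i j <= n)%nat.
Proof. have := ordb i; have := ordb j; rewrite /cdist; case: ifP => ?; lia. Qed.

Lemma cdist_ii i : cdist i i = 0.
Proof. by rewrite /cdist leqnn subnn. Qed.

Lemma cdist_eq0 i j : cdist i j = 0 -> i = j.
Proof.
have := ordb i; have := ordb j; rewrite /cdist => hj hi.
case: ifP => h e; apply: val_inj => /=; lia.
Qed.

Lemma cdist_nxt_l i j : j != i -> cdist (nxt i) j = (cdist i j).-1 /\ (0 < cdist i j)%nat.
Proof.
move=> /eqP hne.
have hne' : nat_of_ord j <> nat_of_ord i by move=> e; apply: hne; apply: val_inj.
have := ordb i; have := ordb j; rewrite /cdist nxtE => hj hi.
case: (ltnP i n) => hin; case: (leqP i j) => hij; case: (leqP _ j) => h2; lia.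
Qed.

Lemma cdist_nxt_ii i : cdist (nxt i) i = n.
Proof.
have := ordb i; rewrite /cdist nxtE => hi.
case: (ltnP i n) => hin; case: (leqP _ i) => h2; lia.
Qed.

Lemma cdist_nxt_r j c : j != nxt c -> cdist j (nxt c) = (cdist j c).+1.
Proof.
move=> /eqP hne.
have hne' : nat_of_ord j <> nat_of_ord (nxt c) by move=> e; apply: hne; apply: val_inj.
move: hne'; have := ordb c; have := ordb j; rewrite /cdist nxtE => hj hc.
case: (ltnP c n) => hcn; case: (leqP j c) => hjc; case: (leqP j _) => h2; lia.
Qed.

Lemma iter_dist c t : iter (cdist c t) nxt c = t.
Proof.
move e : (cdist c t) => k; elim: k c e => [|k IH] c e.
  by rewrite (cdist_eq0 e).
have hne : t != c by apply/eqP => ht; rewrite ht cdist_ii in e.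
have [h1 _] := cdist_nxt_l hne.
rewrite iterSr; apply: IH; rewrite h1 e; done.
Qed.

Lemma iter_full c : iter n.+1 nxt c = c.
Proof.
rewrite iterSr -{2}(iter_dist (nxt c) c) cdist_nxt_ii //.
Qed.

Lemma ncover (i j : 'I_n.+1) : exists k, (0 < k <= n.+1)%nat /\ iter k nxt i = j.
Proof.
case: (eqVneq j i) => [->|hne].
  by exists n.+1; split; [lia|exact: iter_full].
have [_ hpos] := cdist_nxt_l hne.
exists (cdist i j); split; last exact: iter_dist.
have := cdist_le i j; lia.
Qed.

End Cyc.
Arguments nxt {n}.
Arguments cdist {n}.

Close Scope R_scope.

Section Dyn.
Variable n : nat.
Hypothesis hn : (0 < n)%nat.
Variable th : nat.

Definition pol : policy n.+1 := fun inc q _ _ => if (th < q)%nat then inc else nxt inc.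

Definition Stot (x : state n.+1) : nat := (\sum_(j < n.+1) stQ x j)%nat.

Definition a0 : {ffun 'I_n.+1 -> bool} := [ffun => false].

Definition z0 x := step pol x a0.

Definition canon (c : 'I_n.+1) : state n.+1 :=
  ([ffun => 0%nat], c, [ffun => 0%nat], [ffun j => (cdist j c).+1]).

Definition ytgt : state n.+1 := canon ord0.

Lemma decideE x : decide pol x =
  if (th < stQ x (stInc x))%nat then stInc x else nxt (stInc x).
Proof. by []. Qed.

Lemma state_eq (x y : state n.+1) : stQ x = stQ y -> stInc x = stInc y ->
  stL x = stL y -> stV x = stV y -> x = y.
Proof.
case: x => [[[? ?] ?] ?]; case: y => [[[? ?] ?] ?].
rewrite /stQ /stInc /stL /stV /= => -> -> -> ->; done.
Qed.

Lemma Q_z0 x : stQ (z0 x) = [ffun j => stQ x j - (j == decide pol x)].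
Proof. by apply/ffunP => j; rewrite /z0 /step /stQ /= !ffunE addn0. Qed.

Lemma L_z0 x j : stL (z0 x) j = if j == decide pol x then stQ x j - 1 else stL x j.
Proof.
rewrite /z0 /step /stL /= ffunE -/(decide pol x); case: ifP => // /eqP ->.
by rewrite ffunE eqxx /a0 ffunE addn0.
Qed.

Lemma V_z0 x j : stV (z0 x) j = if j == decide pol x then 1 else (stV x j).+1.
Proof. by rewrite /z0 /step /stV /= ffunE. Qed.

Lemma inc_z0 x : stInc (z0 x) = decide pol x.
Proof. by []. Qed.

Lemma S_z0 x : Stot (z0 x) = Stot x - (0 < stQ x (decide pol x))%nat.
Proof.
rewrite /Stot Q_z0 (bigD1 (decide pol x)) //= [in RHS](bigD1 (decide pol x)) //= ffunE eqxx.
rewrite (eq_bigr (fun j => stQ x j)); last first.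
  by move=> j /negbTE hj; rewrite ffunE hj subn0.
change (nat_of_bool true) with 1%nat; case: (stQ x _) => [|q] /=; lia.
Qed.

Lemma Qj_le_S x j : (stQ x j <= Stot x)%nat.
Proof. by rewrite /Stot (bigD1 j) //=; lia. Qed.

Lemma S0_Q x : Stot x = 0 -> stQ x = [ffun => 0].
Proof. move=> h; apply/ffunP => j; rewrite ffunE; have := Qj_le_S x j; rewrite h leqn0 => /eqP. move=> e; exact e. Qed.

Lemma D1 x : (0 < Stot x)%nat -> exists k, (0 < k <= n.+1)%nat /\ (Stot (iter k z0 x) < Stot x)%nat.
Proof.
move=> hS.
have inv : forall k, (k <= n.+1)%nat ->
  (exists k', (0 < k' <= k)%nat /\ (Stot (iter k' z0 x) < Stot x)%nat) \/
  (stQ (iter k z0 x) = stQ x /\ stInc (iter k z0 x) = iter k nxt (stInc x) /\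
   forall k', (0 < k' <= k)%nat -> stQ x (iter k' nxt (stInc x)) = 0).
  elim => [|k IH] hk.
    by right; split => //; split => // k'; lia.
  have [[k' [hk' hlt]]|[hQ [hI hz]]] := IH (ltnW hk).
    by left; exists k'; split => //; lia.
  have eSk : Stot (iter k z0 x) = Stot x by rewrite /Stot hQ.
  have Sz := S_z0 (iter k z0 x).
  rewrite decideE in Sz.
  case hst: (th < stQ (iter k z0 x) (stInc (iter k z0 x)))%nat.
  - left; exists k.+1; split; first lia.
    rewrite hst in Sz; rewrite /= Sz eSk; lia.
  - rewrite hst in Sz.
    case hq: (0 < stQ (iter k z0 x) (nxt (stInc (iter k z0 x))))%nat.
    + left; exists k.+1; split; first lia.
      by rewrite hq in Sz; rewrite /= Sz eSk; lia.
    + right.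
      have hq0 : stQ (iter k z0 x) (nxt (stInc (iter k z0 x))) = 0 by lia.
      have eQ : stQ (iter k.+1 z0 x) = stQ x.
        rewrite -hQ /= Q_z0 decideE hst; apply/ffunP => j; rewrite ffunE.
        case: (eqVneq j (nxt (stInc (iter k z0 x)))) => [->|_]; last by rewrite subn0.
        by rewrite hq0.
      have eI : stInc (iter k.+1 z0 x) = iter k.+1 nxt (stInc x).
        by rewrite /= inc_z0 decideE hst hI.
      split => //; split => // k' hk'.
      case: (eqVneq k' k.+1) => [->|hne]; last by apply: hz; lia.
      by rewrite -hQ /= -hI.
have [//|[_ [_ hz]]] := inv n.+1 (leqnn _).
have : Stot x = 0.
  apply/eqP; rewrite sum_nat_eq0; apply/forallP => j; apply/implyP => _.
  have [k [hk <-]] := ncover hn (stInc x) j.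
  by rewrite hz.
lia.
Qed.

Lemma drain m x : (Stot x <= m)%nat -> exists k, (k <= m * n.+1)%nat /\ Stot (iter k z0 x) = 0.
Proof.
elim: m x => [|m IH] x hx.
  by exists 0; split => //=; lia.
case: (posnP (Stot x)) => h0.
  by exists 0; split => //=; lia.
have [k1 [hk1 hlt]] := D1 h0.
have [k2 [hk2 he]] := IH (iter k1 z0 x) ltac:(lia).
exists (k2 + k1); split; first by rewrite mulSn; lia.
by rewrite iterD.
Qed.

Lemma zero_inv x k : stQ x = [ffun => 0] ->
  stQ (iter k z0 x) = [ffun => 0] /\ stInc (iter k z0 x) = iter k nxt (stInc x) /\
  forall j, if (cdist j (stInc (iter k z0 x)) < k)%nat
            then stL (iter k z0 x) j = 0 /\ stV (iter k z0 x) j = (cdist j (stInc (iter k z0 x))).+1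
            else stL (iter k z0 x) j = stL x j /\ stV (iter k z0 x) j = (stV x j + k)%nat.
Proof.
move=> hx; elim: k => [|k [hQ [hI hj]]].
  split => //; split => // j; rewrite ltn0; split => //; by rewrite addn0.
set xk := iter k z0 x in hQ hI hj *.
have hd : decide pol xk = nxt (stInc xk) by rewrite decideE hQ ffunE.
have eQ : stQ (iter k.+1 z0 x) = [ffun => 0].
  by rewrite /= Q_z0; apply/ffunP => j; rewrite !ffunE hQ ffunE.
have eI : stInc (iter k.+1 z0 x) = nxt (stInc xk) by rewrite /= inc_z0 hd.
split => //; split; first by rewrite eI hI.
move=> j; rewrite eI.
have eL : stL (iter k.+1 z0 x) j =
   if j == nxt (stInc xk) then 0 else stL xk j.
  rewrite iterS -/xk L_z0 hd; case: ifP => // _; by rewrite hQ ffunE.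
have eV : stV (iter k.+1 z0 x) j =
   if j == nxt (stInc xk) then 1 else (stV xk j).+1.
  by rewrite iterS -/xk V_z0 hd.
rewrite eL eV.
case: (eqVneq j (nxt (stInc xk))) => [->|hne].
  by rewrite cdist_ii.
rewrite cdist_nxt_r // ltnS.
have := hj j; case: ifP => _ [-> ->]; split => //; lia.
Qed.

Lemma stL_canon c : stL (canon c) = [ffun => 0%nat]. Proof. by []. Qed.
Lemma stV_canon c : stV (canon c) = [ffun j => (cdist j c).+1]. Proof. by []. Qed.

Lemma to_canon x : stQ x = [ffun => 0] -> iter n.+1 z0 x = canon (stInc x).
Proof.
move=> hx; have [hQ [hI hj]] := zero_inv n.+1 hx.
rewrite iter_full // in hI.
apply: state_eq => //.
- apply/ffunP => j; have := hj j; rewrite hI ltnS cdist_le //.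
  by rewrite stL_canon => -[-> _]; rewrite ffunE.
- apply/ffunP => j; have := hj j; rewrite hI ltnS cdist_le //.
  by rewrite stV_canon => -[_ ->]; rewrite ffunE.
Qed.

Lemma canon_step c : z0 (canon c) = canon (nxt c).
Proof.
have hd : decide pol (canon c) = nxt c by rewrite decideE /= ffunE.
apply: state_eq.
- by rewrite Q_z0; apply/ffunP => j; rewrite !ffunE.
- by rewrite inc_z0 hd.
- apply/ffunP => j; rewrite /z0 /step /stL /= !ffunE -/(decide pol (canon c)) hd.
  by case: ifP => _; rewrite ?ffunE.
- apply/ffunP => j; rewrite /z0 /step /stV /= !ffunE -/(decide pol (canon c)) hd.
  case: (eqVneq j (nxt c)) => [->|hne]; first by rewrite cdist_ii.
  by rewrite cdist_nxt_r.
Qed.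

Lemma canon_iter c m : iter m z0 (canon c) = canon (iter m nxt c).
Proof. elim: m => [//|m IH]; by rewrite /= IH canon_step. Qed.

Lemma hit_F K x : (Stot x <= K)%nat ->
  exists k, (k < K * n.+1 + 2 * n.+1)%nat /\ iter k.+1 z0 x = ytgt.
Proof.
move=> hx.
have [k1 [hk1 h0]] := drain hx.
have hc := to_canon (S0_Q h0).
have [m [hm hmi]] := ncover hn (stInc (iter k1 z0 x)) ord0.
exists (m + (n.+1 + k1)).-1; split; first lia.
rewrite prednK; last lia.
by rewrite !iterD hc canon_iter hmi.
Qed.

End Dyn.

Open Scope R_scope.

Lemma bigR_plus (I : finType) (f g : I -> R) :
  \big[Rplus/0]_(j : I) (f j + g j) = \big[Rplus/0]_(j : I) f j + \big[Rplus/0]_(j : I) g j.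
Proof. by rewrite big_split. Qed.

Lemma bigR_scal (I : finType) c (f : I -> R) :
  \big[Rplus/0]_(j : I) (c * f j) = c * \big[Rplus/0]_(j : I) f j.
Proof. by rewrite big_distrr. Qed.

Lemma bigR_le (I : finType) (f g : I -> R) : (forall j, f j <= g j) ->
  \big[Rplus/0]_(j : I) f j <= \big[Rplus/0]_(j : I) g j.
Proof. move=> h; apply: (big_ind2 (fun x y => x <= y)); [lra|move=> *; lra|by move=> j _]. Qed.

Lemma bigR_pick (I : finType) (i : I) c :
  \big[Rplus/0]_(j : I) (if j == i then c else 0) = c.
Proof.
rewrite (bigD1 i) //= eqxx big1 ?Rplus_0_r // => j /negbTE ->; done.
Qed.

Lemma bigR_INR (I : finType) (f : I -> nat) :
  \big[Rplus/0]_(j : I) INR (f j) = INR (\sum_(j : I) f j)%nat.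
Proof.
elim/big_rec2: _ => [|j y1 y2 _ ->] //=.
by rewrite plus_INR.
Qed.

Lemma INR_b (m : nat) (b : bool) : INR (m + b)%nat = INR m + (if b then 1 else 0).
Proof. by rewrite plus_INR; case: b. Qed.

Lemma stQ_step N (p : policy N) x a j :
  stQ (step p x a) j = (stQ x j - (j == decide p x) + a j)%nat.
Proof. by rewrite /step /stQ /= ffunE. Qed.

Lemma stInc_step N (p : policy N) x a : stInc (step p x a) = decide p x.
Proof. by []. Qed.

Section Lyap.
Variable n : nat.
Hypothesis hn : (0 < n)%nat.
Variable th : nat.
Variable lam : 'I_n.+1 -> R.
Hypothesis hcap : in_capacity lam.

Local Notation pi := (@pol n th).

Definition Lam := \big[Rplus/0]_(j : 'I_n.+1) lam j.

Lemma lam_ge0 j : 0 <= lam j.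
Proof. by case: hcap. Qed.

Lemma Lam_lt1 : Lam < 1.
Proof. by case: hcap => _; rewrite sumR_big big_enum. Qed.

Lemma Lam_ge0 : 0 <= Lam.
Proof. rewrite /Lam; apply: (big_ind (fun x => 0 <= x)); [lra|move=> *; lra|move=> j _; exact: lam_ge0]. Qed.

Lemma lam_le_Lam j : lam j <= Lam.
Proof.
rewrite /Lam (bigD1 j) //=.
rewrite -{1}(Rplus_0_r (lam j)); apply: Rplus_le_compat_l.
apply: (big_ind (fun x => 0 <= x)); [lra|move=> *; lra|move=> i _; exact: lam_ge0].
Qed.

Lemma lam01 j : 0 <= lam j <= 1.
Proof. have := lam_le_Lam j; have := Lam_lt1; have := lam_ge0 j; lra. Qed.

Definition beta := INR n.+1 / (1 - Lam).

Lemma beta_eq : beta - beta * Lam = INR n.+1.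
Proof. rewrite /beta; have := Lam_lt1; move=> h; field; lra. Qed.

Lemma beta_ge0 : 0 <= beta.
Proof.
rewrite /beta; apply: Rmult_le_pos; first exact: pos_INR.
apply: Rlt_le; apply: Rinv_0_lt_compat; have := Lam_lt1; lra.
Qed.

Definition W (x : state n.+1) : R :=
  \big[Rplus/0]_(j : 'I_n.+1) (INR (stQ x j) * (beta + INR (cdist (stInc x) j))).

Lemma W_ge0 x : 0 <= W x.
Proof.
rewrite /W; apply: (big_ind (fun x => 0 <= x)); [lra|move=> *; lra|move=> j _].
apply: Rmult_le_pos; first exact: pos_INR.
have := beta_ge0; have := pos_INR (cdist (stInc x) j); lra.
Qed.

Definition Wdet x := let s := decide pi x in
  \big[Rplus/0]_(j : 'I_n.+1) (INR (stQ x j - (j == s)) * (beta + INR (cdist s j))).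

Lemma EW x : Earr lam (fun a => W (step pi x a)) =
  Wdet x + \big[Rplus/0]_(j : 'I_n.+1) (lam j * (beta + INR (cdist (decide pi x) j))).
Proof.
rewrite /W /Wdet /=.
transitivity (Earr lam (fun a =>
  (fun _ => \big[Rplus/0]_(j : 'I_n.+1) (INR (stQ x j - (j == decide pi x)) * (beta + INR (cdist (decide pi x) j)))) a +
  \big[Rplus/0]_(j : 'I_n.+1) ((beta + INR (cdist (decide pi x) j)) * (if a j then 1 else 0)))).
  apply: Earr_ext => a; rewrite -bigR_plus; apply: eq_bigr => j _.
  rewrite stQ_step stInc_step INR_b; case: (a j); set A := INR _; set B := (beta + _); ring.
rewrite Earr_plus Earr_const Earr_bigsum; congr Rplus; apply: eq_bigr => j _.
by rewrite Earr_scal Earr_marg Rmult_comm.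
Qed.

Lemma lamsum_le s : \big[Rplus/0]_(j : 'I_n.+1) (lam j * (beta + INR (cdist s j)))
   <= (beta + INR n) * Lam.
Proof.
rewrite /Lam -bigR_scal; apply: bigR_le => j.
rewrite Rmult_comm; apply: Rmult_le_compat_r; first exact: lam_ge0.
have := le_INR _ _ (leP (cdist_le hn s j)); lra.
Qed.

Lemma Wdet_stay x : (th < stQ x (stInc x))%nat -> Wdet x + beta = W x.
Proof.
move=> h.
have hd : decide pi x = stInc x by rewrite decideE h.
rewrite /Wdet /W /= hd.
rewrite -{2}(bigR_pick (stInc x) beta) -bigR_plus; apply: eq_bigr => j _.
case: (eqVneq j (stInc x)) => [->|hne].
  rewrite cdist_ii (_ : (stQ x (stInc x) - true = stQ x (stInc x) - 1)%nat) // minus_INR /=; last by apply/leP; lia.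
  set A := INR _; ring.
by rewrite subn0 Rplus_0_r.
Qed.

Lemma Wdet_move x : (stQ x (stInc x) <= th)%nat ->
  Wdet x <= W x - INR (Stot x) + INR (n.+1 * th).
Proof.
move=> h.
have hd : decide pi x = nxt (stInc x) by rewrite decideE; move: h; rewrite leqNgt => /negbTE ->.
rewrite /Wdet /W /Stot /= hd -bigR_INR.
rewrite -(bigR_pick (stInc x) (INR (n.+1 * th))).
have -> : forall u v w : R, u - v + w = u + ((-1) * v + w) by move=> *; ring.
rewrite -bigR_scal -bigR_plus -bigR_plus; apply: bigR_le => j.
have hb := beta_ge0.
have hsub : INR (stQ x j - (j == nxt (stInc x))) <= INR (stQ x j).
  apply: le_INR; apply/leP; lia.
have hpos : 0 <= beta + INR (cdist (nxt (stInc x)) j) by have := pos_INR (cdist (nxt (stInc x)) j); lra.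
apply: Rle_trans (Rmult_le_compat_r _ _ _ hpos hsub) _.
case: (eqVneq j (stInc x)) => [->|hne].
  rewrite cdist_nxt_ii // cdist_ii.
  have : INR (stQ x (stInc x)) <= INR th by apply: le_INR; apply/leP.
  rewrite mult_INR S_INR.
  set A := INR (stQ _ _); set B := INR th; set C := INR n; move=> hAB.
  have hC : 0 <= C by exact: pos_INR.
  rewrite INR_0; nra.
have [e hpos'] := cdist_nxt_l hn hne.
rewrite e -subn1 minus_INR; last by apply/leP; lia.
set A := INR (stQ _ _); set D := INR (cdist _ _); simpl INR; ring_simplify; lra.
Qed.

Definition cst1 := INR (n.+1 * th) + (beta + INR n) * Lam.

Lemma c1_ge0 : 0 <= cst1.
Proof.
rewrite /cst1; have := pos_INR (n.+1 * th); have := pos_INR n; have := beta_ge0; have := Lam_ge0.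
move=> *; nra.
Qed.


Lemma EW_cases x :
  (Earr lam (fun a => W (step pi x a)) <= W x - 1) \/
  (Earr lam (fun a => W (step pi x a)) <= W x - INR (Stot x) + cst1).
Proof.
rewrite EW; have ls := lamsum_le (decide pi x).
case: (ltnP th (stQ x (stInc x))) => h.
- left; have e := Wdet_stay h; have be := beta_eq.
  have := Lam_lt1; have := Lam_ge0; have := pos_INR n; rewrite S_INR in be.
  set L := Lam in ls be *; set B := beta in ls be e *; set C := INR n in ls be *.
  move=> *; nra.
- right; have e := Wdet_move h; rewrite /cst1; lra.
Qed.

Lemma EW_all x : Earr lam (fun a => W (step pi x a)) <= W x + cst1.
Proof.
have := c1_ge0; have := pos_INR (Stot x).
case: (EW_cases x) => h *; lra.
Qed.

Variable K : nat.
Hypothesis hK : cst1 + 1 <= INR K.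

Lemma EW_out x : (K < Stot x)%nat -> Earr lam (fun a => W (step pi x a)) <= W x - 1.
Proof.
move=> hx; have : INR K + 1 <= INR (Stot x).
  rewrite -S_INR; apply: le_INR; apply/leP; exact: hx.
case: (EW_cases x) => h *; lra.
Qed.

Definition p0 := arrP lam (a0 n).

Lemma p0_pos : 0 < p0.
Proof.
rewrite /p0 arrP_big; apply: (big_ind (fun x => 0 < x)); [lra|move=> *; nra|].
move=> j _; rewrite /a0 ffunE; have := lam_le_Lam j; have := Lam_lt1; lra.
Qed.

Lemma p0_le1 : p0 <= 1.
Proof.
have : 0 <= p0 <= 1.
  rewrite /p0 arrP_big; apply: (big_ind (fun x => 0 <= x <= 1)); [lra|move=> *; nra|].
  move=> j _; rewrite /a0 ffunE; have := lam01 j; lra.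
lra.
Qed.

Definition M := (K * n.+1 + 2 * n.+1)%nat.

Definition hm x := (find (fun k => iter k.+1 (z0 th) x == ytgt n) (iota 0 M)).+1.

Lemma hm_le x : (hm x <= M.+1)%nat.
Proof. by rewrite /hm ltnS -{2}(size_iota 0 M) find_size. Qed.

Lemma hm_min x k : (k < M)%nat -> iter k.+1 (z0 th) x = ytgt n -> (hm x <= k.+1)%nat.
Proof.
move=> hk e; rewrite /hm ltnS; case: (leqP (find _ _) k) => // hlt.
have := before_find 0%nat hlt; rewrite nth_iota // add0n e eqxx; done.
Qed.

Lemma hm_hit x : (Stot x <= K)%nat -> iter (hm x) (z0 th) x = ytgt n.
Proof.
move=> hx; have [k [hk e]] := hit_F hn th hx.
have hh : has (fun k => iter k.+1 (z0 th) x == ytgt n) (iota 0 M).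
  apply/hasP; exists k; last by rewrite e.
  by rewrite mem_iota add0n.
have := nth_find 0%nat hh; rewrite nth_iota; last by move: hh; rewrite has_find size_iota.
by rewrite add0n => /eqP.
Qed.

Definition Hc := (1 + cst1) * INR M.+1 / p0 ^ M.+1.
Definition G := 1 + cst1 + (1 - p0) * Hc.

Fixpoint hf m := match m with 0%nat => 0 | m'.+1 => G + p0 * hf m' end.

Lemma Hc_ge0 : 0 <= Hc.
Proof.
rewrite /Hc; apply: Rmult_le_pos; last by apply: Rlt_le; apply: Rinv_0_lt_compat; apply: pow_lt; exact: p0_pos.
apply: Rmult_le_pos; [have := c1_ge0; lra|exact: pos_INR].
Qed.

Lemma G_ge0 : 0 <= G.
Proof. rewrite /G; have := c1_ge0; have := Hc_ge0; have := p0_le1; move=> *; nra. Qed.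

Lemma hf_ge0 m : 0 <= hf m.
Proof.
elim: m => [|m IH] /=; first lra.
have := G_ge0; have := p0_pos; move=> *; nra.
Qed.

Lemma hf_step m : hf m <= hf m.+1.
Proof.
elim: m => [|m IH] /=; first by have := G_ge0; have := p0_pos; move=> *; nra.
rewrite /= in IH; have := p0_pos; move=> *; nra.
Qed.

Lemma hf_mono m m' : (m <= m')%nat -> hf m <= hf m'.
Proof.
move=> /subnK <-; elim: (m' - m)%nat => [|k IH]; first by rewrite add0n; lra.
rewrite addSn; exact: Rle_trans IH (hf_step _).
Qed.

Lemma hf_bound m : hf m <= (1 + cst1) * INR m + Hc * (1 - p0 ^ m).
Proof.
elim: m => [|m IH]; first by rewrite /=; lra.
rewrite [hf _]/= [p0 ^ _]/= S_INR /G.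
have hp := p0_pos; have hp1 := p0_le1; have hc := c1_ge0; have hH := Hc_ge0.
have hm := pos_INR m.
have h1 := Rmult_le_compat_l p0 _ _ (Rlt_le _ _ hp) IH.
have h2 : 0 <= (1 - p0) * ((1 + cst1) * INR m).
  apply: Rmult_le_pos; first lra. apply: Rmult_le_pos; lra.
set P := p0 ^ m in IH h1 *; set H := Hc in IH h1 *; set C := cst1 in IH h1 h2 *; set X := INR m in IH h1 h2 *.
set Y := hf m in IH h1 *.
have e1 : p0 * ((1 + C) * X + H * (1 - P)) = p0 * (1 + C) * X + p0 * H - H * (p0 * P) by ring.
have e2 : (1 - p0) * ((1 + C) * X) = (1 + C) * X - p0 * (1 + C) * X by ring.
rewrite e1 in h1; rewrite e2 in h2.
set Q := p0 * P in h1 *. set Z := p0 * (1 + C) * X in h1 h2 *. set U := p0 * H in h1 *.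
have e3 : (1 - p0) * H = H - U by rewrite /U; ring.
rewrite e3.
have e4 : (1 + C) * (X + 1) = (1 + C) * X + 1 + C by ring.
rewrite e4. set V := (1 + C) * X in h2 *.
have e5 : H * (1 - Q) = H - H * Q by ring.
rewrite e5. set T := H * Q in h1 *. lra.
Qed.

Lemma hf_le_Hc m : (m <= M.+1)%nat -> hf m <= Hc.
Proof.
move=> hm; apply: Rle_trans (hf_mono hm) _.
apply: Rle_trans (hf_bound _) _.
have hp : 0 < p0 ^ M.+1 by apply: pow_lt; exact: p0_pos.
have e : Hc * p0 ^ M.+1 = (1 + cst1) * INR M.+1.
  by rewrite /Hc; field; lra.
have e2 : Hc * (1 - p0 ^ M.+1) = Hc - Hc * p0 ^ M.+1 by ring.
rewrite e2 e; lra.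
Qed.

Definition psi (x : state n.+1) := if (Stot x <= K)%nat then hf (hm x) else Hc.
Definition Wl x := W x + psi x.

Lemma psi_le x : psi x <= Hc.
Proof. rewrite /psi; case: ifP => _; [exact: hf_le_Hc (hm_le x)|lra]. Qed.

Lemma psi_ge0 x : 0 <= psi x.
Proof. rewrite /psi; case: ifP => _; [exact: hf_ge0|exact: Hc_ge0]. Qed.

Lemma Wl_ge0 x : 0 <= Wl x.
Proof. rewrite /Wl; have := W_ge0 x; have := psi_ge0 x; lra. Qed.

Lemma z0E (x : state n.+1) : z0 th x = step pi x (a0 n).
Proof. by []. Qed.

Lemma Stot_z0_le (x : state n.+1) : (Stot (z0 th x) <= Stot x)%nat.
Proof. by rewrite (S_z0 hn) leq_subr. Qed.

Lemma F_key (x : state n.+1) : (Stot x <= K)%nat ->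
  (if z0 th x == ytgt n then 0 else psi (z0 th x)) <= hf (hm x).-1.
Proof.
move=> hx; case: eqP => hz; first exact: hf_ge0.
have hx' : (Stot (z0 th x) <= K)%nat by apply: leq_trans (Stot_z0_le x) hx.
rewrite /psi hx'; apply: hf_mono.
have hh := hm_hit hx; have hl := hm_le x.
move: hh hl; rewrite /hm; case: (find _ _) => [|m] hh hl.
  by exfalso; apply: hz; exact: hh.
rewrite iterSr in hh.
rewrite -/(hm (z0 th x)) /=; apply: hm_min => //; lia.
Qed.

Lemma Wl_drift x :
  1 + Earr lam (fun a => if step pi x a == ytgt n then 0 else Wl (step pi x a)) <= Wl x.
Proof.
set g := fun a => if step pi x a == ytgt n then 0 else psi (step pi x a).
have hE : Earr lam (fun a => if step pi x a == ytgt n then 0 else Wl (step pi x a)) <=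
          Earr lam (fun a => W (step pi x a)) + Earr lam g.
  rewrite -Earr_plus; apply: (Earr_le lam01) => a; rewrite /g /Wl.
  case: ifP => _; [have := W_ge0 (step pi x a); lra|lra].
have gb : forall a, g a <= Hc.
  move=> a; rewrite /g; case: ifP => _; [exact: Hc_ge0|exact: psi_le].
case: (leqP (Stot x) K) => hx.
- have hs := Earr_split lam01 (a0 n) gb.
  have hk := F_key hx.
  change (g (a0 n)) with (if z0 th x == ytgt n then 0 else psi (z0 th x)) in hs.
  change (arrP lam (a0 n)) with p0 in hs.
  have hall := EW_all x.
  have hp := p0_pos.
  have hpk : p0 * (if z0 th x == ytgt n then 0 else psi (z0 th x)) <= p0 * hf (hm x).-1.
    by apply: Rmult_le_compat_l; lra.
  have eW : Wl x = W x + G + p0 * hf (hm x).-1.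
    rewrite /Wl /psi hx /hm /=; ring.
  rewrite eW /G; lra.
- have hout := EW_out hx.
  have hg : Earr lam g <= Hc by rewrite -(Earr_const lam Hc); apply: (Earr_le lam01).
  have eW : Wl x = W x + Hc by rewrite /Wl /psi leqNgt hx.
  rewrite eW; lra.
Qed.

End Lyap.

Open Scope R_scope.

Lemma nat_ge (r : R) : exists K : nat, r <= INR K.
Proof.
have [h1 h2] := archimed r.
case: (Rle_lt_dec 0 r) => hr.
- have hz : (0 <= up r)%Z by apply: le_IZR; lra.
  exists (Z.to_nat (up r)); rewrite INR_IZR_INZ Znat.Z2Nat.id //; lra.
- exists 0%nat; rewrite /=; lra.
Qed.

Lemma pol_opt n (hn : (0 < n)%nat) th : throughput_optimal (@pol n th).
Proof.
move=> lam hcap x0.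
have [K hK] := nat_ge (@cst1 n th lam + 1).
exists (ytgt n); split.
- apply: (pos_rec (lam01 hcap) (Wl_ge0 th hcap K)).
  exact: (Wl_drift hn hcap hK).
- right; apply: (fpass_sum1 (lam01 hcap) (Wl_ge0 th hcap K)).
  exact: (Wl_drift hn hcap hK).
Qed.

Lemma Earr_ge_term N (lam : 'I_N -> R) (lam01 : forall j, 0 <= lam j <= 1) f a :
  (forall a, 0 <= f a) -> arrP lam a * f a <= Earr lam f.
Proof.
move=> h; rewrite Earr_big (bigD1 a) //=.
rewrite -{1}(Rplus_0_r (arrP lam a * f a)); apply: Rplus_le_compat_l.
apply: (big_ind (fun x => 0 <= x)); [lra|move=> *; lra|].
move=> b _; apply: Rmult_le_pos; [exact: arrP_ge0|exact: h].
Qed.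

Close Scope R_scope.

Theorem proposition3 (N : nat) (hN : 1 < N) :
  exists pi1 pi2 : policy N,
    throughput_optimal pi1 /\ throughput_optimal pi2 /\
    exists (lam : 'I_N -> R) (i0 : 'I_N) (y : state N),
      in_capacity lam /\ reachable pi1 lam (empty_state i0) y /\
      decide pi1 y <> decide pi2 y.
Proof.
case: N hN => [|n] hN; first by [].
have hn : (0 < n)%nat by [].
Open Scope R_scope.
exists (@pol n 0), (@pol n 1).
split; first exact: pol_opt.
split; first exact: pol_opt.
set s := nxt (ord0 : 'I_n.+1).
set lam := fun j : 'I_n.+1 => if j == s then / 2 else 0.
set ast : {ffun 'I_n.+1 -> bool} := [ffun j => j == s].
exists lam, ord0, (step (@pol n 0) (empty_state ord0) ast).
have l01 : forall j, 0 <= lam j <= 1 by move=> j; rewrite /lam; case: ifP => _; lra.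
split.
  split; first by move=> j; have := l01 j; lra.
  rewrite sumR_big big_enum /= bigR_pick; lra.
have hd0 : decide (@pol n 0) (empty_state ord0) = s by rewrite decideE /stQ /= ffunE.
split.
  exists 1%nat; rewrite /=.
  apply: Rlt_le_trans (Earr_ge_term l01 ast _) => /=.
    rewrite eqxx Rmult_1_r arrP_big.
    apply: (big_ind (fun x => 0 < x)); [lra|move=> *; nra|].
    move=> j _; rewrite /ast /lam ffunE; case: (j == s); lra.
  by move=> a; case: ifP => _; lra.
have hq : stQ (step (@pol n 0) (empty_state ord0) ast) s = 1%nat.
  by rewrite stQ_step hd0 /ast !ffunE eqxx.
have hi : stInc (step (@pol n 0) (empty_state ord0) ast) = s by [].
rewrite !decideE hi hq /=.
by apply/eqP; rewrite eq_sym nxt_neq.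
Qed.
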